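(* For every integer $t\ge 0$: $m_2^{(1)}(3,3t+2)=15t+8$, $m_2^{(1)}(3,3t+3)=15t+15$, and $m_2^{(1)}(3,3t+4)=15t+16$.
   Context: For a prime power $q$ and $N\ge1$, a multiset of points in $\mathrm{PG}(N,q)$ is a map $\mathcal{K}$ from the points to $\mathbb{Z}_{\ge0}$, with $\mathcal{K}(S)=\sum_{P\in S}\mathcal{K}(P)$; its cardinality is $\mathcal{K}(\mathrm{PG}(N,q))$. Dimensions are projective (lines have dimension 1). For $0\le r\le N-1$ and a positive integer $w$, $m_q^{(r)}(N,w)$ is the maximum cardinality of a multiset of points in $\mathrm{PG}(N,q)$ such that every $r$-dimensional subspace has multiplicity at most $w$. *)

(* Defs.v *)
From HB Require Import structures.
From mathcomp Require Import all_boot all_order all_algebra.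
Set Implicit Arguments. Unset Strict Implicit. Unset Printing Implicit Defensive.
Import GRing.Theory.

(* Projective geometry PG(N, F) over a finite field F, modelled inside the
   vector space F^(N+1) = 'rV[F]_(N.+1).  A (projective) subspace of
   projective dimension r is a vector subspace of (vector) dimension r+1,
   represented canonically by the square matrix <<U>>%MS spanning it
   (so each subspace has exactly one representative U with U = <<U>>). *)

Definition pg_subspaces (F : finFieldType) (N r : nat) : {set 'M[F]_(N.+1)} :=
  [set U : 'M[F]_(N.+1) | (U == <<U>>%MS) && (\rank U == r.+1)].

Definition pg_points (F : finFieldType) (N : nat) : {set 'M[F]_(N.+1)} :=
  pg_subspaces F N 0.

(* A multiset of points: a map K from points to nat (values of K outside
   the point set are irrelevant).  K(S) = sum of K(P) over points P in S. *)
Definition mult (F : finFieldType) (N : nat) (K : 'M[F]_(N.+1) -> nat)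
  (S : 'M[F]_(N.+1)) : nat :=
  \sum_(P in pg_points F N | (P <= S)%MS) K P.

Definition card_ms (F : finFieldType) (N : nat) (K : 'M[F]_(N.+1) -> nat) : nat :=
  \sum_(P in pg_points F N) K P.

Definition r_bounded (F : finFieldType) (N r w : nat) (K : 'M[F]_(N.+1) -> nat) :=
  forall S, S \in pg_subspaces F N r -> @mult F N K S <= w.

(* m is the maximum cardinality m_q^{(r)}(N,w) (with q = #|F|). *)
Definition is_m (F : finFieldType) (N r w m : nat) : Prop :=
  (exists K, @r_bounded F N r w K /\ @card_ms F N K = m) /\
  (forall K, @r_bounded F N r w K -> @card_ms F N K <= m).

(* Main.v *)
Require Import Defs.
From mathcomp Require Import all_boot all_order all_algebra.
Import GRing.Theory.
Local Open Scope ring_scope.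
Notation F2 := ('F_2 : finFieldType).
Notation V := ('rV[F2]_4).

Lemma F2_cases (a : F2) : a = 0 \/ a = 1.
Proof. case: a => [[|[|n]]] //= H; [left|right]; exact: val_inj. Qed.

Lemma F2_nz (a : F2) : a != 0 -> a = 1.
Proof. by case: (F2_cases a) => ->; rewrite ?eqxx. Qed.

Lemma F2_add_self (a : F2) : a + a = 0.
Proof. by case: (F2_cases a) => ->; apply: val_inj. Qed.

Lemma V_add_self (v : V) : v + v = 0.
Proof. by apply/matrixP => i j; rewrite !mxE F2_add_self. Qed.

Lemma card_F2 : #|F2| = 2%N.
Proof. exact: card_Fp. Qed.
Lemma gen_inj (v u : V) : v != 0 -> u != 0 -> <<v>>%MS = <<u>>%MS -> v = u.
Proof.
move=> nv nu /genmxP/andP[/sub_rVP[a ev] _]; subst v.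
have : a != 0 by apply: contraNneq nv => ->; rewrite scale0r.
by move/F2_nz ->; rewrite scale1r.
Qed.

Lemma point_gen (v : V) : v != 0 -> <<v>>%MS \in pg_points F2 3.
Proof.
by move=> nv; rewrite inE genmx_id eqxx /= genmxE rank_rV nv.
Qed.

Lemma point_ex (P : 'M[F2]_4) : P \in pg_points F2 3 -> exists2 v : V, v != 0 & P = <<v>>%MS.
Proof.
rewrite inE => /andP[/eqP eP rP].
have [i ni] : exists i, row i P != 0.
  apply/existsP; apply: contraLR rP; rewrite negb_exists => /forallP H.
  have -> : P = 0 by apply/row_matrixP => i; rewrite row0; apply/eqP; move: (H i); rewrite negbK.
  by rewrite mxrank0.
exists (row i P) => //; rewrite {1}eP; apply/genmxP.
have e : (row i P == P)%MS by rewrite -(mxrank_leqif_eq (row_sub i P)) rank_rV ni (eqP rP).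
by apply/eqmxP; apply: eqmx_sym; apply/eqmxP.
Qed.

Lemma points_eq : pg_points F2 3 = [set <<v>>%MS | v : V in [set v : V | v != 0]].
Proof.
apply/setP => P; apply/idP/imsetP.
  by case/point_ex => v nv ->; exists v; rewrite ?inE.
by case=> v; rewrite inE => nv ->; exact: point_gen.
Qed.

Lemma mult_vec (K : 'M[F2]_4 -> nat) (S : 'M[F2]_4) :
  mult K S = (\sum_(v : V | (v != 0%R) && (v <= S)%MS) K <<v>>%MS)%N.
Proof.
rewrite /mult points_eq big_mkcondr big_imset /=; last first.
  by move=> v u; rewrite !inE; apply: gen_inj.
rewrite [RHS]big_mkcondr /=; apply: eq_big => [v|v _]; first by rewrite inE.
by rewrite genmxE.
Qed.

Lemma card_vec (K : 'M[F2]_4 -> nat) :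
  card_ms K = (\sum_(v : V | v != 0%R) K <<v>>%MS)%N.
Proof.
rewrite /card_ms points_eq big_imset /=; last first.
  by move=> v u; rewrite !inE; apply: gen_inj.
by apply: eq_bigl => v; rewrite inE.
Qed.
Lemma F2_opp (a : F2) : - a = a.
Proof. by case: (F2_cases a) => ->; apply: val_inj. Qed.

Lemma V_opp (v : V) : - v = v.
Proof. by apply/matrixP => i j; rewrite !mxE F2_opp. Qed.

Lemma sub_eq (v u : V) : v != 0 -> u != 0 -> (v <= u)%MS -> v = u.
Proof.
move=> nv nu /sub_rVP[a ev]; subst v.
have : a != 0 by apply: contraNneq nv => ->; rewrite scale0r.
by move/F2_nz ->; rewrite scale1r.
Qed.

Lemma nz_row m (A : 'M[F2]_(m, 4)) : A != 0 -> exists i, row i A != 0.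
Proof.
move=> nA; apply/existsP; apply: contraNT nA; rewrite negb_exists => /forallP H.
by apply/eqP/row_matrixP => i; rewrite row0; apply/eqP; move: (H i); rewrite negbK.
Qed.

Lemma addV_nz (v u : V) : u != v -> (v + u)%R != 0.
Proof.
apply: contraNneq => /eqP; rewrite addr_eq0 => /eqP ->; by rewrite V_opp.
Qed.

Lemma addV_neql (v u : V) : u != 0 -> (v + u)%R != v.
Proof. by move=> nu; apply: contraNneq nu => e; apply/eqP; apply: (addrI v); rewrite e addr0. Qed.

Lemma addV_neqr (v u : V) : v != 0 -> (v + u)%R != u.
Proof. by rewrite addrC; apply: addV_neql. Qed.

Lemma rank_line (v u : V) : v != 0 -> u != 0 -> u != v -> \rank (v + u)%MS = 2%N.
Proof.
move=> nv nu nuv; apply/eqP; rewrite eqn_leq; apply/andP; split.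
  by move: (mxrank_adds_leqif v u) => [+ _]; rewrite !rank_rV nv nu.
have : (v < v + u)%MS.
  rewrite ltmxE addsmxSl /= addsmx_sub submx_refl /=.
  by apply: contra nuv => /(@sub_eq u v nu nv) ->.
by move/rank_ltmx; rewrite rank_rV nv.
Qed.

Lemma line_in (v u : V) : v != 0 -> u != 0 -> u != v ->
  <<(v + u)%MS>>%MS \in pg_subspaces F2 3 1.
Proof.
by move=> nv nu nuv; rewrite inE genmx_id eqxx /= genmxE rank_line.
Qed.

Lemma line_vecs (v u w : V) : v != 0 -> u != 0 -> u != v ->
  ((w != 0) && (w <= v + u)%MS) = (w \in [:: v; u; (v + u)%R]).
Proof.
move=> nv nu nuv; apply/idP/idP.
  case/andP=> nw /sub_addsmxP[[x y] /= ew].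
  have /sub_rVP[a ea] : (x *m v <= v)%MS by apply: submxMl.
  have /sub_rVP[b eb] : (y *m u <= u)%MS by apply: submxMl.
  rewrite ew ea eb in nw *.
  case: (F2_cases a) => ea0; case: (F2_cases b) => eb0; rewrite ea0 eb0 in nw *;
  rewrite ?scale0r ?scale1r ?add0r ?addr0 in nw *; rewrite ?inE ?eqxx ?orbT //.
  by rewrite eqxx in nw.
rewrite !inE => /or3P[] /eqP ->.
- by rewrite nv addsmxSl.
- by rewrite nu addsmxSr.
- by rewrite addV_nz // addmx_sub_adds.
Qed.

Lemma mult_line (K : 'M[F2]_4 -> nat) (v u : V) : v != 0 -> u != 0 -> u != v ->
  mult K <<(v + u)%MS>>%MS = (K <<v>>%MS + K <<u>>%MS + K <<(v + u)%R>>%MS)%N.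
Proof.
move=> nv nu nuv; rewrite mult_vec.
rewrite (eq_bigl (fun w => w \in [:: v; u; (v + u)%R])); last first.
  by move=> w; rewrite genmxE line_vecs.
rewrite -big_uniq /=; last first.
  by rewrite !inE negb_or eq_sym nuv eq_sym addV_neql // eq_sym addV_neqr.
by rewrite !big_cons big_nil addn0 addnA.
Qed.

Lemma line_rep (S : 'M[F2]_4) : S \in pg_subspaces F2 3 1 ->
  exists v : V, exists u : V, [/\ v != 0, u != 0, u != v & S = <<(v + u)%MS>>%MS].
Proof.
rewrite inE => /andP[/eqP eS rS].
have nS : S != 0 by apply: contraTneq rS => ->; rewrite mxrank0.
have [i ni] := @nz_row _ S nS.
set v := row i S.
have [j nj] : exists j, ~~ (row j S <= v)%MS.
  apply/existsP; apply: contraTT rS; rewrite negb_exists => /forallP H.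
  have : (S <= v)%MS by apply/row_subP => j; move: (H j); rewrite negbK.
  by move/mxrankS; rewrite rank_rV ni => le; apply/negP => /eqP e; rewrite e in le.
have nu : row j S != 0 by apply: contraNneq nj => ->; rewrite sub0mx.
have nuv : row j S != v by apply: contraNneq nj => ->; rewrite submx_refl.
set u := row j S.
exists v, u; split => //.
rewrite {1}eS; apply/genmxP.
have sub : (v + u <= S)%MS by rewrite addsmx_sub !row_sub.
have e : (v + u == S)%MS by rewrite -(mxrank_leqif_eq sub) rank_line // (eqP rS).
by apply/eqmxP; apply: eqmx_sym; apply/eqmxP.
Qed.
From mathcomp Require Import zify.

Lemma card_V : #|{: V}| = 16%N.
Proof. by rewrite card_mx card_F2. Qed.

Lemma sum_nz_const (c : nat) : (\sum_(v : V | v != 0%R) c)%N = (15 * c)%N.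
Proof.
rewrite (eq_bigl (fun v => v \in [set~ (0 : V)])); last by move=> v; rewrite !inE.
by rewrite sum_nat_const cardsC1 card_V.
Qed.

Lemma sum_N_const (v : V) (c : nat) : v != 0 ->
  (\sum_(u : V | (u != 0%R) && (u != v)) c)%N = (14 * c)%N.
Proof.
move=> nv.
rewrite (eq_bigl (fun u => u \in [set~ (0 : V)] :\ v)); last by move=> u; rewrite !inE andbC.
rewrite sum_nat_const; have h := cardsD1 v [set~ (0 : V)].
rewrite cardsC1 card_V in_setC1 nv /= in h.
by rewrite add1n in h; case: h => <-.
Qed.
Lemma point_bound (K : 'M[F2]_4 -> nat) (w : nat) (v : V) :
  r_bounded 1 w K -> v != 0 -> (card_ms K + 6 * K <<v>>%MS <= 7 * w)%N.
Proof.
move=> hK nv.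
set k := fun x : V => K <<x>>%MS.
have hsum : (\sum_(u : V | (u != 0%R) && (u != v)) mult K <<(v + u)%MS>>%MS <= 14 * w)%N.
  rewrite -(sum_N_const v w nv); apply: leq_sum => u /andP[nu nuv].
  by apply: hK; apply: line_in.
have e1 : (\sum_(u : V | (u != 0%R) && (u != v)) mult K <<(v + u)%MS>>%MS =
    \sum_(u : V | (u != 0%R) && (u != v)) (k v + k u + k (v + u)%R))%N.
  by apply: eq_bigr => u /andP[nu nuv]; rewrite mult_line.
have e2 : (\sum_(u : V | (u != 0%R) && (u != v)) k (v + u)%R =
    \sum_(u : V | (u != 0%R) && (u != v)) k u)%N.
  rewrite (reindex_inj (addrI v)) /=; apply: eq_big => [u|u _]; last first.
    by rewrite addrA V_add_self add0r.
  rewrite addr_eq0 V_opp.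
  have -> : ((v + u)%R != v) = (u != 0).
    apply/idP/idP; first by apply: contraNneq => ->; rewrite addr0.
    exact: addV_neql.
  by rewrite [u == v]eq_sym andbC.
have e3 : card_ms K = (k v + \sum_(u : V | (u != 0%R) && (u != v)) k u)%N.
  rewrite card_vec (bigD1 v) //=.
have e4 := sum_N_const v (k v) nv.
have e5 : (\sum_(u : V | (u != 0%R) && (u != v)) (k v + k u + k (v + u)%R) =
   14 * k v + \sum_(u : V | (u != 0%R) && (u != v)) k u + \sum_(u : V | (u != 0%R) && (u != v)) k u)%N.
  by rewrite !big_split e2 e4.
rewrite e1 e5 in hsum.
rewrite e3; change (K <<v>>%MS) with (k v); move: hsum.
generalize (\sum_(u | (u != 0%R) && (u != v)) k u)%N; move=> s; lia.
Qed.
Definition e0 : V := const_mx 1.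
Lemma e0_nz : e0 != 0.
Proof. apply/eqP => h; have := congr1 (fun m : V => m ord0 ord0) h; rewrite !mxE => /eqP; by rewrite oner_eq0. Qed.

Lemma upper (K : 'M[F2]_4 -> nat) (w : nat) : r_bounded 1 w K ->
  exists M, (card_ms K <= 15 * M)%N /\ (card_ms K + 6 * M <= 7 * w)%N.
Proof.
move=> hK.
have [v nv vmax] := @arg_maxnP _ e0 (fun v : V => v != 0%R) (fun v => K <<v>>%MS) e0_nz.
exists (K <<v>>%MS); split; last exact: point_bound.
rewrite card_vec -sum_nz_const; apply: leq_sum => u nu; exact: vmax.
Qed.
Definition Kcap (c : nat) (P : 'M[F2]_4) : nat :=
  (c + [exists v : V, [&& v != 0%R, P == <<v>>%MS & v ord0 ord0 != 0%R]])%N.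
Definition Kpt (c : nat) (P : 'M[F2]_4) : nat := (c + (P == <<e0>>%MS))%N.

Lemma Kcap_val c (v : V) : v != 0 -> Kcap c <<v>>%MS = (c + (v ord0 ord0 != 0%R))%N.
Proof.
move=> nv; rewrite /Kcap; congr (_ + nat_of_bool _)%N; apply/existsP/idP.
  by case=> u /and3P[nu /eqP/(@gen_inj v u nv nu) -> ].
by move=> h; exists v; rewrite nv eqxx h.
Qed.

Lemma Kpt_val c (v : V) : v != 0 -> Kpt c <<v>>%MS = (c + (v == e0))%N.
Proof.
move=> nv; rewrite /Kpt; congr (_ + nat_of_bool _)%N; apply/eqP/eqP => [|-> //].
exact: (@gen_inj v e0 nv e0_nz).
Qed.

Lemma b3 (a b : F2) : ((a != 0%R) + (b != 0%R) + (a + b != 0%R)%R <= 2)%N.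
Proof. by case: (F2_cases a) => ->; case: (F2_cases b) => ->. Qed.

Lemma arith3 (c x y z d : nat) : (x + y + z <= d -> c + x + (c + y) + (c + z) <= 3 * c + d)%N.
Proof. lia. Qed.

Lemma Kcap_line c S : S \in pg_subspaces F2 3 1 -> (mult (Kcap c) S <= 3 * c + 2)%N.
Proof.
case/line_rep => v [u [nv nu nuv ->]].
rewrite mult_line // !Kcap_val // ?addV_nz //.
have := b3 (v ord0 ord0) (u ord0 ord0); rewrite !mxE; apply: arith3.
Qed.

Lemma Kpt_line c S : S \in pg_subspaces F2 3 1 -> (mult (Kpt c) S <= 3 * c + 1)%N.
Proof.
case/line_rep => v [u [nv nu nuv ->]].
rewrite mult_line // !Kpt_val // ?addV_nz //.
have : ((v == e0) + (u == e0) + ((v + u)%R == e0) <= 1)%N.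
  have h1 := @addV_neql v u nu; have h2 := @addV_neqr v u nv.
  case: (v =P e0) => [ev|_]; case: (u =P e0) => [eu|_]; case: ((v + u)%R =P e0) => [ew|_] //;
  move: nuv h1 h2; rewrite ?ew ?ev ?eu ?eqxx //.
apply: arith3.
Qed.

Lemma Kconst_line c S : S \in pg_subspaces F2 3 1 -> (mult (fun _ => c) S <= 3 * c)%N.
Proof.
case/line_rep => v [u [nv nu nuv ->]].
rewrite mult_line //; lia.
Qed.

Lemma count_cap : (\sum_(v : V | v != 0%R) (v ord0 ord0 != 0%R : nat))%N = 8%N.
Proof.
set b := fun v : V => (v ord0 ord0 != 0%R : nat).
have h0 : (\sum_(v : V) b v = \sum_(v : V | v != 0%R) b v)%N.
  by rewrite (bigD1 0%R) //= /b mxE eqxx add0n.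
have h1 : (\sum_(v : V) b v = \sum_(v : V) b (e0 + v)%R)%N.
  by rewrite (reindex_inj (addrI e0)).
have h2 : (\sum_(v : V) (b v + b (e0 + v)%R) = 16)%N.
  rewrite -card_V -sum1_card; apply: eq_bigr => v _.
  rewrite /b !mxE; by case: (F2_cases (v ord0 ord0)) => ->.
rewrite big_split -h1 in h2.
rewrite -h0; move: h2; rewrite /=; lia.
Qed.

Lemma card_cap c : card_ms (Kcap c) = (15 * c + 8)%N.
Proof.
rewrite card_vec (eq_bigr (fun v : V => c + (v ord0 ord0 != 0%R : nat))%N); last first.
  by move=> v nv; rewrite Kcap_val.
by rewrite big_split sum_nz_const count_cap.
Qed.

Lemma card_pt c : card_ms (Kpt c) = (15 * c + 1)%N.
Proof.
rewrite card_vec (eq_bigr (fun v : V => c + (v == e0 : nat))%N); last first.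
  by move=> v nv; rewrite Kpt_val.
rewrite big_split sum_nz_const (bigD1 e0) ?e0_nz //= eqxx big1 //.
by move=> v /andP[_ /negbTE ->].
Qed.

Lemma card_const c : card_ms (fun _ : 'M[F2]_4 => c) = (15 * c)%N.
Proof. by rewrite card_vec sum_nz_const. Qed.

Local Close Scope ring_scope.

Theorem mainTheorem3 (t : nat) :
  [/\ is_m ('F_2 : finFieldType) 3 1 (3 * t + 2) (15 * t + 8),
      is_m ('F_2 : finFieldType) 3 1 (3 * t + 3) (15 * t + 15)
    & is_m ('F_2 : finFieldType) 3 1 (3 * t + 4) (15 * t + 16)].
Proof.
split; split.
- exists (Kcap t); split; last exact: card_cap.
  by move=> S /(Kcap_line t).
- by move=> K /upper [M [h1 h2]]; lia.
- exists (fun _ => t.+1); split; last by rewrite card_const; lia.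
  move=> S /(Kconst_line t.+1); lia.
- by move=> K /upper [M [h1 h2]]; lia.
- exists (Kpt t.+1); split; last by rewrite card_pt; lia.
  move=> S /(Kpt_line t.+1); lia.
- by move=> K /upper [M [h1 h2]]; lia.
Qed.
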